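(* Let $G$ be a connected graph with $|V(G)| \ge 3$. If $\det(G) \neq 1$, then $\frac{1}{2}\det(G) \le \det'(G) \le \det(G)$.
   Context: A vertex subset $S$ of $G$ is a vertex determining set if the only automorphism of $G$ fixing every vertex of $S$ is the identity; the determining number $\det(G)$ is the minimum size of a vertex determining set. For a graph $G$ with at most one isolated vertex and no component isomorphic to $K_2$, an edge subset $T$ is an edge determining set if the only automorphism $\phi$ of $G$ satisfying $\{\phi(u),\phi(v)\}=\{u,v\}$ for all $\{u,v\}\in T$ is the identity; the determining index $\det'(G)$ is the minimum size of an edge determining set. *)

(* Defs.v *)
From mathcomp Require Import all_boot all_fingroup.
Set Implicit Arguments. Unset Strict Implicit. Unset Printing Implicit Defensive.

Definition simple_graph (T : finType) (e : rel T) : Prop :=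
  symmetric e /\ irreflexive e.

Definition connected_graph (T : finType) (e : rel T) : Prop :=
  forall x y : T, connect e x y.

Definition is_aut (T : finType) (e : rel T) (s : {perm T}) : bool :=
  [forall x : T, forall y : T, e (s x) (s y) == e x y].

Definition vdet_set (T : finType) (e : rel T) (S : {set T}) : bool :=
  [forall s : {perm T}, (is_aut e s && [forall x in S, s x == x]) ==> (s == 1%g)].

(* Determining number det(G): minimum size of a vertex determining set
   (V(G) itself is always determining, so the default #|T| is harmless). *)
Definition det_number (T : finType) (e : rel T) : nat :=
  \big[minn/#|T|]_(S : {set T} | vdet_set e S) #|S|.

Definition is_edge (T : finType) (e : rel T) (A : {set T}) : bool :=
  [exists u, exists v, e u v && (A == [set u; v])].

Definition edge_set (T : finType) (e : rel T) : {set {set T}} :=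
  [set A | is_edge e A].

Definition edet_set (T : finType) (e : rel T) (X : {set {set T}}) : bool :=
  (X \subset edge_set e) &&
  [forall s : {perm T}, (is_aut e s && [forall A in X, s @: A == A]) ==> (s == 1%g)].

(* Determining index det'(G): minimum size of an edge determining set
   (under the paper's hypotheses E(G) itself is edge determining). *)
Definition det_index (T : finType) (e : rel T) : nat :=
  \big[minn/#|edge_set e|]_(X : {set {set T}} | edet_set e X) #|X|.

(* Main.v *)
Require Import Defs.
From mathcomp Require Import all_boot all_fingroup.
Set Implicit Arguments. Unset Strict Implicit. Unset Printing Implicit Defensive.

Section BigMin.
Variables (I : finType) (P : pred I) (F : I -> nat) (d : nat).
Lemma bigmin_le i : P i -> \big[minn/d]_(j | P j) F j <= F i.
Proof.
move=> Pi; move: (mem_index_enum i); elim: (index_enum I) => [//|a s IH].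
rewrite inE big_cons => /orP [/eqP <-|hs]; first by rewrite Pi geq_minl.
by case: (P a); [apply: leq_trans (geq_minr _ _) (IH hs) | apply: IH].
Qed.
Lemma bigmin_cases : \big[minn/d]_(j | P j) F j = d \/
  exists2 k, P k & \big[minn/d]_(j | P j) F j = F k.
Proof.
apply: (big_ind (fun x => x = d \/ exists2 k, P k & x = F k)); first by left.
- move=> x y Hx Hy /=; case: (leqP x y) => h.
    by [].
  by [].
- by move=> j Pj; right; exists j.
Qed.
End BigMin.

Section G.
Variables (T : finType) (e : rel T).

Fixpoint R n x y := if n is n'.+1 then R n' x y || [exists z, e x z && R n' z y]
  else x == y.

Lemma R_S n x y : R n x y -> R n.+1 x y.
Proof. by move=> h /=; rewrite h. Qed.

Lemma R_mono m n x y : m <= n -> R m x y -> R n x y.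
Proof.
elim: n => [|n IH]; first by rewrite leqn0 => /eqP ->.
rewrite leq_eqVlt => /orP [/eqP -> //| hlt] h.
by apply: R_S; apply: IH.
Qed.

Lemma R_cons n x z y : e x z -> R n z y -> R n.+1 x y.
Proof. move=> h1 h2 /=; apply/orP; right; apply/existsP; exists z; by rewrite h1 h2. Qed.

Lemma R_snoc n x z y : R n x z -> e z y -> R n.+1 x y.
Proof.
elim: n x => [|n IH] x.
  move=> /= /eqP -> h; apply/orP; right; apply/existsP; exists y; by rewrite h eqxx.
case/orP => [h|/existsP [w /andP [h1 h2]]] hzy.
  by apply: R_S; apply: IH h hzy.
exact: R_cons h1 (IH _ h2 hzy).
Qed.

Lemma R_sym n x y : symmetric e -> R n x y -> R n y x.
Proof.
move=> Hs; elim: n x y => [|n IH] x y /=; first by rewrite eq_sym.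
case/orP => [h | /existsP [z /andP [h1 h2]]].
  by apply: R_S; apply: IH.
by apply: R_snoc (IH _ _ h2) _; rewrite Hs.
Qed.

Lemma R_aut f n x y : is_aut e f -> R n (f x) (f y) = R n x y.
Proof.
move=> H.
have He : forall x y, e (f x) (f y) = e x y.
  by move=> a b; move/forallP: H => /(_ a) /forallP /(_ b) /eqP.
elim: n x => [|n IH] x /=; first by rewrite (inj_eq perm_inj).
rewrite IH; congr orb; apply/existsP/existsP => [[z /andP[h1 h2]] | [z /andP[h1 h2]]].
  exists (f^-1 z)%g; by rewrite -He -IH permKV h1 h2.
by exists (f z); rewrite He IH h1 h2.
Qed.

Lemma R_of_path p x : path e x p -> R (size p) x (last x p).
Proof.
elim: p x => [|z p IH] x /=; first by move=> _; exact: eqxx.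
by case/andP => h1 h2; exact: R_cons h1 (IH _ h2).
Qed.

Lemma R_connect x y : connect e x y -> exists n, R n x y.
Proof. by move/connectP => [p hp ->]; exists (size p); exact: R_of_path. Qed.

Lemma R_step n x y : x != y -> R n x y ->
  exists z, e x z /\ exists m, R m z y /\ ~~ R m x y.
Proof.
elim: n x => [|n IH] x hxy /=; first by rewrite (negbTE hxy).
case/orP => [h | /existsP [z /andP [h1 h2]]]; first exact: IH hxy h.
case: (boolP (R n x y)) => h; first exact: IH hxy h.
by exists z; split => //; exists n; split.
Qed.

Lemma boundary (A : {set T}) x y : x \in A -> y \notin A -> connect e x y ->
  exists a b, [/\ a \in A, b \notin A & e a b].
Proof.
move=> hx hy /connectP [p hp hl].
elim: p x hx hp hl => [|z p IH] x hx /=.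
  by move=> _ hl; move: hy; rewrite hl hx.
case/andP => h1 h2 hl.
case: (boolP (z \in A)) => hz; first exact: IH hz h2 hl.
by exists x, z.
Qed.


Lemma aut_mem (f : {perm T}) (A : {set T}) x : f @: A = A -> x \in A -> f x \in A.
Proof. by move=> hA hx; rewrite -hA; apply: imset_f. Qed.

Lemma key (S : {set T}) r (p : T -> T) (Y : {set {set T}}) :
  vdet_set e S -> r \in S ->
  (forall v, v \in S -> e v (p v)) ->
  (forall v, v \in S -> v != r -> exists m, R m (p v) r /\ ~~ R m v r) ->
  Y \subset edge_set e ->
  (forall f, is_aut e f ->
     (forall A, A \in [set [set v; p v] | v in S] :|: Y -> f @: A = A) -> f r = r) ->
  edet_set e ([set [set v; p v] | v in S] :|: Y).
Proof.
move=> HS hr Hp Hm HY Hr; apply/andP; split.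
  apply/subsetP => A; rewrite inE => /orP [/imsetP [v hv ->] | hA].
    rewrite inE; apply/existsP; exists v; apply/existsP; exists (p v).
    by rewrite Hp // eqxx.
  exact: (subsetP HY).
apply/forallP => f; apply/implyP => /andP [ha /forallP hf].
have hA : forall A, A \in [set [set v; p v] | v in S] :|: Y -> f @: A = A.
  by move=> A hA; apply/eqP; exact: (implyP (hf A) hA).
have hfr := Hr f ha hA.
have hv : forall v, v \in S -> f v = v.
  move=> v hv.
  have hmem : f v \in [set v; p v].
    apply: aut_mem; last exact: set21.
    by apply: hA; rewrite inE; apply/orP; left; apply: imset_f.
  case: (eqVneq v r) => [-> // | hvr].
  move: hmem; rewrite !inE => /orP [/eqP // | /eqP hpv].
  have [m [h1 h2]] := Hm v hv hvr.
  by move: h2; rewrite -(R_aut m v r ha) hpv hfr h1.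
have hall : [forall x in S, f x == x] by apply/forall_inP => x hx; rewrite hv.
by move: (forallP HS f); rewrite ha hall.
Qed.


Lemma upper : simple_graph e -> connected_graph e -> 3 <= #|T| ->
  forall S : {set T}, vdet_set e S -> 1 < #|S| ->
  exists X, edet_set e X /\ #|X| <= #|S|.
Proof.
move=> [Hsym _] Hc H3 S HS /card_gt1P [r [s [hr hs hrs]]].
have [g Hg] : exists g : T -> T, forall v, v != r ->
    e v (g v) /\ exists m, R m (g v) r /\ ~~ R m v r.
  apply: (@fin_all_exists T (fun _ => T)
    (fun v z => v != r -> e v z /\ exists m, R m z r /\ ~~ R m v r)).
  move=> v; case: (eqVneq v r) => [-> | hvr]; first by exists r.
  have [n hn] := R_connect (Hc v r).
  have [z [h1 h2]] := R_step hvr hn.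
  by exists z.
have [n0 hn0] := R_connect (Hc r s).
have [q1 [hq1 [m1 [hm1 hnm1]]]] := R_step hrs hn0.
case: m1 hm1 hnm1 => [|m'] hm1 hnm1.
- move/eqP: hm1 => hq; subst q1.
  pose p := fun v => if v == r then s else if v == s then r else g v.
  have hpr : p r = s by rewrite /p eqxx.
  have hps : p s = r by rewrite /p /= eq_sym (negbTE hrs) eqxx.
  have [y0 hy0] : exists y, y \notin [set r; s].
    apply/existsP; apply: contraT; rewrite negb_exists => /forallP h.
    have : #|[set: T]| <= #|[set r; s]|.
      by apply: subset_leq_card; apply/subsetP => y _; move: (h y); rewrite negbK.
    by rewrite cardsT cards2 hrs => /(leq_trans H3).
  have [a [b [ha hb hab]]] := boundary (set21 r s) hy0 (Hc r y0).
  exists ([set [set v; p v] | v in S] :|: [set [set a; b]]); split.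
  + apply: (@key S r p) => //.
    * move=> v hv; rewrite /p; case: (eqVneq v r) => [-> /= //|hvr].
      case: (eqVneq v s) => [-> /=|hvs]; first by rewrite Hsym.
      by case: (Hg v hvr).
    * move=> v hv hvr; rewrite /p (negbTE hvr); case: (eqVneq v s) => [->|hvs] /=.
        by exists 0; split => //=; rewrite eq_sym.
      by case: (Hg v hvr).
    * rewrite sub1set inE; apply/existsP; exists a; apply/existsP; exists b.
      by rewrite hab eqxx.
    * move=> f hf hA.
      have h1 : f @: [set r; s] = [set r; s].
        by rewrite -hpr; apply: hA; apply/setUP; left; exact: imset_f.
      have h2 : f @: [set a; b] = [set a; b].
        by apply: hA; apply/setUP; right; rewrite set11.
      have hfa : f a = a.
        have m1 := aut_mem h1 ha.
        have := aut_mem h2 (set21 a b).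
        rewrite !inE => /orP [/eqP // | /eqP hfb].
        by move: m1; rewrite hfb (negbTE hb).
      move: ha; rewrite !inE => /orP [/eqP har | /eqP has]; first by rewrite -har.
      have := aut_mem h1 (set21 r s).
      rewrite !inE => /orP [/eqP // | /eqP hfr].
      have : f r = f a by rewrite hfr hfa has.
      move/perm_inj => hra.
      by move: hrs; rewrite hra has eqxx.
  + have himg : [set [set v; p v] | v in S] = [set [set v; p v] | v in S :\ s].
      apply/setP => A; apply/imsetP/imsetP => [[v hv ->]|[v hv ->]].
        case: (eqVneq v s) => [hvs|hvs].
          exists r; first by rewrite !inE hrs hr.
          by rewrite hvs hps hpr setUC.
        by exists v => //; rewrite !inE hvs hv.
      by exists v => //; move: hv; rewrite !inE => /andP [].
    rewrite himg cardsU cards1.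
    apply: leq_trans (leq_subr _ _) _.
    have hc := leq_imset_card (fun v => [set v; p v]) (S :\ s).
    by rewrite (cardsD1 s S) hs add1n addn1 ltnS.
- have hq1s : q1 != s.
    apply: contraNneq hnm1 => hq.
    apply: (R_mono (m:=1)) => //; apply: (R_cons hq1); by rewrite /= hq.
  have [y [hsy hy]] : exists y, e s y /\ R m' y q1.
    have := R_sym Hsym hm1.
    rewrite /= => /orP [h | /existsP [y /andP [h1 h2]]].
      by move: hnm1; rewrite (R_cons hq1 (R_sym Hsym h)).
    by exists y.
  pose p := fun v => if v == r then q1 else if v == s then y else g v.
  have hpr : p r = q1 by rewrite /p eqxx.
  have hps : p s = y by rewrite /p /= eq_sym (negbTE hrs) eqxx.
  exists ([set [set v; p v] | v in S] :|: set0); split.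
  + apply: (@key S r p) => //.
    * move=> v hv; rewrite /p; case: (eqVneq v r) => [-> /= //|hvr].
      case: (eqVneq v s) => [-> /= //|hvs].
      by case: (Hg v hvr).
    * move=> v hv hvr; rewrite /p (negbTE hvr); case: (eqVneq v s) => [->|hvs] /=.
        exists m'.+1; split.
          by apply: (R_snoc hy); rewrite Hsym.
        by apply: contra hnm1 => h; exact: R_sym Hsym h.
      by case: (Hg v hvr).
    * exact: sub0set.
    * move=> f hf hA.
      have m1 : f r \in [set r; q1].
        rewrite -hpr; apply: aut_mem (set21 _ _); apply: hA; apply/setUP; left.
        exact: imset_f.
      have m2 : f s \in [set s; y].
        rewrite -hps; apply: aut_mem (set21 _ _); apply: hA; apply/setUP; left.
        exact: imset_f.
      move: m1; rewrite !inE => /orP [/eqP // | /eqP hfr].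
      exfalso; move: m2; rewrite !inE => /orP [/eqP hfs | /eqP hfs].
        by move: hnm1; rewrite -(R_aut m'.+1 r s hf) hfr hfs hm1.
      move: hnm1; rewrite -(R_aut m'.+1 r s hf) hfr hfs.
      by rewrite (R_mono (leqnSn m') (R_sym Hsym hy)).
  + by rewrite setU0 leq_imset_card.
Qed.

Lemma other_vertex (x : T) : 3 <= #|T| -> exists y, y \notin [set x].
Proof.
move=> H3; apply/existsP; apply: contraT; rewrite negb_exists => /forallP h.
have : #|[set: T]| <= #|[set x]|.
  by apply: subset_leq_card; apply/subsetP => y _; move: (h y); rewrite negbK.
by rewrite cardsT cards1 => /(leq_trans H3).
Qed.

Lemma lower : connected_graph e -> 3 <= #|T| ->
  forall X : {set {set T}}, X \subset edge_set e -> (edet_set e X \/ X = edge_set e) ->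
  det_number e <= 2 * #|X|.
Proof.
move=> Hc H3 X Hsub HX.
have vd : vdet_set e (cover X).
  apply/forallP => f; apply/implyP => /andP [hf /forall_inP hfix].
  case: HX => [/andP [_ /forallP H] | HX].
    have hall : [forall A in X, f @: A == A].
      apply/forall_inP => A hA; apply/eqP.
      rewrite -[RHS]imset_id; apply: eq_in_imset => x hx /=.
      apply/eqP; apply: hfix; rewrite /cover; apply/bigcupP; by exists A.
    by move: (H f); rewrite hf hall.
  apply/eqP/permP => x; rewrite perm1; apply/eqP; apply: hfix.
  have [y0 hy0] := other_vertex x H3.
  have [a [b [ha hb hab]]] := boundary (set11 x) hy0 (Hc x y0).
  rewrite /cover; apply/bigcupP; exists [set a; b].
    rewrite HX inE; apply/existsP; exists a; apply/existsP; exists b.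
    by rewrite hab eqxx.
  by move: ha; rewrite inE => /eqP ->; exact: set21.
apply: leq_trans (_ : det_number e <= #|cover X|) _.
  by rewrite /det_number; apply: bigmin_le.
apply: leq_trans (leq_card_cover (X : {set {set T}})).1 _.
apply: leq_trans (_ : \sum_(A in X) #|A| <= \sum_(A in X) 2) _.
  apply: leq_sum => A hA.
  move: (subsetP Hsub A hA); rewrite inE => /existsP [u /existsP [v /andP [_ /eqP ->]]].
  by rewrite cards2; case: (u != v).
by rewrite sum_nat_const mulnC.
Qed.

End G.

Theorem corollary1 (T : finType) (e : rel T) :
  simple_graph e -> connected_graph e -> 3 <= #|T| ->
  det_number e <> 1 ->
  det_number e <= 2 * det_index e /\ det_index e <= det_number e.
Proof.
move=> Hs Hc H3 Hdet.
have [S [HS hSd]] : exists S, vdet_set e S /\ #|S| = det_number e.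
  case: (bigmin_cases (fun S : {set T} => vdet_set e S) (fun S => #|S|) #|T|)
    => [h|[S hS h]].
    exists setT; split; last by rewrite cardsT /det_number h.
    apply/forallP => f; apply/implyP => /andP [_ /forall_inP h'].
    apply/eqP/permP => x; rewrite perm1; apply/eqP; apply: h'; by rewrite inE.
  by exists S; split => //; rewrite /det_number h.
have [X [HX hXS]] : exists X, edet_set e X /\ #|X| <= det_number e.
  case hk: #|S| => [|[|k]].
  - exists set0; split; last by rewrite cards0.
    apply/andP; split; first exact: sub0set.
    apply/forallP => f; apply/implyP => /andP [hf _].
    have hall : [forall x in S, f x == x].
      apply/forall_inP => x hx; move: (card0_eq hk x); rewrite hx; done.
    by move: (forallP HS f); rewrite hf hall.
  - by exfalso; apply: Hdet; rewrite -hSd hk.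
  - have h2S : 1 < #|S| by rewrite hk.
    have [X [h1 h2]] := upper Hs Hc H3 HS h2S.
    by exists X; split => //; rewrite -hSd.
split.
- case: (bigmin_cases (fun X : {set {set T}} => edet_set e X) (fun X => #|X|)
     #|edge_set e|) => [h|[Y hY h]].
    rewrite /det_index h; apply: lower => //; by right.
  rewrite /det_index h; apply: lower => //; [by case/andP: hY | by left].
- apply: leq_trans _ hXS; rewrite /det_index; exact: bigmin_le.
Qed.
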